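(* Let $K$ be a triangle and $\mathcal B(K)=\{\mathbf v\in[P^4(K)]^2:\mathbf v=\mathbf 0\text{ on }\partial K\}$. If $\mathbf v\in\mathcal B(K)$ and $\operatorname{div}\mathbf v=0$, then $\mathbf v=\mathbf 0$.
   Context: For a triangle $K\subset\mathbb R^2$ and $k\ge0$, $P^k(K)$ denotes the set of functions which coincide with a polynomial of degree at most $k$ on $K$ and vanish outside $K$. *)

(* Defs.v *)
From HB Require Import structures.
From mathcomp Require Import all_boot all_order all_algebra.
From mathcomp Require Import mpoly.
Set Implicit Arguments. Unset Strict Implicit. Unset Printing Implicit Defensive.
Import Order.TTheory GRing.Theory Num.Theory.
Local Open Scope ring_scope.

Section Defs.
Variable R : realFieldType.

Definition pt (x : R * R) : 'I_2 -> R :=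
  fun i => if val i == 0%N then x.1 else x.2.

Definition comb3 (l1 l2 l3 : R) (a b c : R * R) : R * R :=
  (l1 * a.1 + l2 * b.1 + l3 * c.1, l1 * a.2 + l2 * b.2 + l3 * c.2).

Definition nondeg_triangle (a b c : R * R) : Prop :=
  (b.1 - a.1) * (c.2 - a.2) - (b.2 - a.2) * (c.1 - a.1) != 0.

Definition in_triangle (a b c x : R * R) : Prop :=
  exists l1 l2 l3 : R, [/\ 0 <= l1, 0 <= l2, 0 <= l3, l1 + l2 + l3 = 1
                          & x = comb3 l1 l2 l3 a b c].

Definition in_segment (p q x : R * R) : Prop :=
  exists t : R, [/\ 0 <= t, t <= 1 & x = comb3 (1 - t) t 0 p q q].

Definition on_boundary (a b c x : R * R) : Prop :=
  in_segment a b x \/ in_segment b c x \/ in_segment c a x.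

Definition deg_le (k : nat) (p : {mpoly R[2]}) : bool := (msize p <= k.+1)%N.

Definition div2 (p1 p2 : {mpoly R[2]}) : {mpoly R[2]} :=
  mderiv ord0 p1 + mderiv (@Ordinal 2 1 isT) p2.

End Defs.

(* Main.v *)
Require Import Defs.
From HB Require Import structures.
From mathcomp Require Import all_boot all_order all_algebra.
From mathcomp Require Import mpoly.
From mathcomp Require Import ring lra zify.
From Stdlib Require Import Lia.
Import Order.TTheory GRing.Theory Num.Theory.
Local Open Scope ring_scope.
Set Implicit Arguments. Unset Strict Implicit. Unset Printing Implicit Defensive.

Section S.
Variable R : realFieldType.

Definition mk (i j : nat) : 'X_{1..2} :=
  [multinom (if val k == 0%N then i else j) | k < 2].

Lemma mkE i j (k : 'I_2) : mk i j k = if val k == 0%N then i else j.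
Proof. by rewrite mnmE. Qed.

Lemma mk_eq i j (m : 'X_{1..2}) : (mk i j == m) = (i == m ord0) && (j == m (@Ordinal 2 1 isT)).
Proof.
apply/eqP/andP => [<-|[/eqP -> /eqP ->]]; first by rewrite !mkE.
apply/mnmP => k; rewrite mkE; case: k => [[|[|k]] hk] //=; congr (m _); exact: val_inj.
Qed.

Lemma mdeg2 (m : 'X_{1..2}) : mdeg m = (m ord0 + m (@Ordinal 2 1 isT))%N.
Proof. rewrite mdegE !big_ord_recl big_ord0 addn0 /=; congr (_ + m _)%N; exact: val_inj. Qed.

Lemma mpoly_expand (p : {mpoly R[2]}) : (msize p <= 5)%N ->
  p = \sum_(i < 5) \sum_(j < 5) p@_(mk i j) *: 'X_[mk i j].
Proof.
move=> hp; apply/mpolyP => m.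
rewrite raddf_sum /=.
under eq_bigr do rewrite raddf_sum /=.
under eq_bigr do under eq_bigr do rewrite mcoeffZ mcoeffX mk_eq.
set a := m ord0; set b := m (@Ordinal 2 1 isT).
case: (ltnP a 5) => ha; last first.
  rewrite memN_msupp_eq0; last by apply: msize_mdeg_ge; rewrite mdeg2; lia.
  rewrite big1 // => i _; rewrite big1 // => j _.
  have : i != a :> nat by apply/eqP => e; move: (ltn_ord i); rewrite e; lia.
  by move/negbTE => ->; rewrite mulr0.
case: (ltnP b 5) => hb; last first.
  rewrite memN_msupp_eq0; last by apply: msize_mdeg_ge; rewrite mdeg2; lia.
  rewrite big1 // => i _; rewrite big1 // => j _.
  have : j != b :> nat by apply/eqP => e; move: (ltn_ord j); rewrite e; lia.
  by move/negbTE => ->; rewrite andbF mulr0.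
rewrite (bigD1 (Ordinal ha)) //= [X in _ + X]big1 ?addr0; last first.
  move=> i /eqP hi; rewrite big1 // => j _.
  have : (i:nat) != a by apply/eqP => e; apply: hi; apply: val_inj.
  by move/negbTE => ->; rewrite mulr0.
rewrite (bigD1 (Ordinal hb)) //= [X in _ + X]big1 ?addr0; last first.
  move=> j /eqP hj.
  have : (j:nat) != b by apply/eqP => e; apply: hj; apply: val_inj.
  by move/negbTE => ->; rewrite andbF mulr0.
rewrite !eqxx mulr1; congr (p@_ _); apply/mnmP => k; rewrite mkE.
case: k => [[|[|k]] hk] //=; congr (m _); exact: val_inj.
Qed.

Lemma msize_le_coef n (p : {mpoly R[n]}) k :
  (forall m, (k <= mdeg m)%N -> p@_m = 0) -> (msize p <= k)%N.
Proof.
move=> h; rewrite msizeE; apply/bigmax_leqP_seq => m hm _.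
rewrite ltnNge; apply/negP => /h /eqP; rewrite mcoeff_eq0 hm //.
Qed.

Lemma msize_mderiv n (p : {mpoly R[n]}) i k :
  (msize p <= k)%N -> (msize (mderiv i p) <= k)%N.
Proof.
move=> hp; apply: msize_le_coef => m hm.
rewrite mcoeff_mderiv memN_msupp_eq0 ?mul0rn //.
apply: msize_mdeg_ge; rewrite mdegD; exact: (leq_trans hp (leq_trans hm (leq_addr _ _))).
Qed.

Lemma meval_mk i j x y : ('X_[mk i j] : {mpoly R[2]}).@[pt (x, y)] = x ^+ i * y ^+ j.
Proof. by rewrite mevalX !big_ord_recl big_ord0 mulr1 !mkE /pt /=. Qed.

Lemma eval_expand (p : {mpoly R[2]}) x y : (msize p <= 5)%N ->
  p.@[pt (x, y)] = \sum_(i < 5) \sum_(j < 5) p@_(mk i j) * (x ^+ i * y ^+ j).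
Proof.
move=> hp; rewrite {1}(mpoly_expand hp) raddf_sum /=; apply: eq_bigr => i _.
rewrite raddf_sum /=; apply: eq_bigr => j _; by rewrite mevalZ meval_mk.
Qed.

Lemma mk_U0 i j : (mk i j + U_(ord0))%MM = mk i.+1 j.
Proof. apply/mnmP => k; rewrite mnmDE mnm1E !mkE; case: k => [[|[|k]] hk] //=; lia. Qed.
Lemma mk_U1 i j : (mk i j + U_(@Ordinal 2 1 isT))%MM = mk i j.+1.
Proof. apply/mnmP => k; rewrite mnmDE mnm1E !mkE; case: k => [[|[|k]] hk] //=; lia. Qed.

Lemma coef_d0 (p : {mpoly R[2]}) i j : (mderiv ord0 p)@_(mk i j) = p@_(mk i.+1 j) *+ i.+1.
Proof. by rewrite mcoeff_mderiv mk_U0 mkE. Qed.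
Lemma coef_d1 (p : {mpoly R[2]}) i j : (mderiv (@Ordinal 2 1 isT) p)@_(mk i j) = p@_(mk i j.+1) *+ j.+1.
Proof. by rewrite mcoeff_mderiv mk_U1 mkE. Qed.

Lemma coef_hi (p : {mpoly R[2]}) i j : (msize p <= 5)%N -> (5 <= i + j)%N -> p@_(mk i j) = 0.
Proof.
move=> hp hij; apply: memN_msupp_eq0; apply: msize_mdeg_ge.
by rewrite mdeg2 !mkE /=; apply: leq_trans hij.
Qed.

Section Chain.
Variable lq : 2.-tuple {mpoly R[2]}.
Definition CR (p : {mpoly R[2]}) := forall i, mderiv i (p \mPo lq) =
  \sum_(j < 2) (mderiv j p \mPo lq) * mderiv i (tnth lq j).

Lemma CR_add p q : CR p -> CR q -> CR (p + q).
Proof.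
move=> hp hq i; rewrite comp_mpolyD mderivD hp hq -big_split /=.
by apply: eq_bigr => j _; rewrite mderivD comp_mpolyD mulrDl.
Qed.

Lemma CR_scale c p : CR p -> CR (c *: p).
Proof.
move=> hp i; rewrite comp_mpolyZ mderivZ hp scaler_sumr /=.
by apply: eq_bigr => j _; rewrite mderivZ comp_mpolyZ scalerAl.
Qed.

Lemma CR_mul p q : CR p -> CR q -> CR (p * q).
Proof.
move=> hp hq i; rewrite rmorphM /= mderivM hp hq mulr_suml mulr_sumr -big_split /=.
apply: eq_bigr => j _; rewrite mderivM comp_mpolyD !rmorphM /=; ring.
Qed.

Lemma CR_1 : CR 1.
Proof.
move=> i; rewrite comp_mpoly1 -mpolyC1 mderivC big1 // => j _.
by rewrite mderivC comp_mpolyC mul0r.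
Qed.

Lemma CR_X (j : 'I_2) : CR 'X_j.
Proof.
move=> i; rewrite comp_mpolyXU (bigD1 j) //= big1 ?addr0.
  rewrite mderivX mnm1E eqxx.
  have -> : (U_(j) - U_(j))%MM = 0%MM by apply/mnmP => k; rewrite mnmBE subnn mnm0E.
  rewrite mpolyX0 scale1r comp_mpoly1 mul1r.
  by rewrite -tnth_nth.
move=> k hk; rewrite mderivX mnm1E eq_sym (negbTE hk) scale0r comp_mpoly0 mul0r //.
Qed.

Lemma CR_all p : CR p.
Proof.
rewrite [p]mpolyE; apply: (big_ind CR).
- by move=> i; rewrite comp_mpoly0 mderiv0 big1 // => j _; rewrite mderiv0 comp_mpoly0 mul0r.
- exact: CR_add.
move=> m _; apply: CR_scale; rewrite mpolyXE_id; apply: (big_ind CR).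
- exact: CR_1.
- exact: CR_mul.
move=> i _; elim: (m i) => [|e ih]; first by rewrite expr0; exact: CR_1.
by rewrite exprS; apply: CR_mul => //; exact: CR_X.
Qed.
End Chain.

Lemma msizeM_le' n (p q : {mpoly R[n]}) : (msize (p * q) <= (msize p + msize q).-1)%N.
Proof.
have [->|hp] := eqVneq p 0; first by rewrite mul0r msize0.
have [->|hq] := eqVneq q 0; first by rewrite mulr0 msize0.
by rewrite msizeM.
Qed.

Lemma msize_pow n (q : {mpoly R[n]}) e : (msize q <= 2)%N -> (msize (q ^+ e) <= e.+1)%N.
Proof.
move=> hq; elim: e => [|e ih]; first by rewrite expr0 msize1.
rewrite exprS; apply: leq_trans (msizeM_le' _ _) _; lia.
Qed.

Lemma msize_comp (p : {mpoly R[2]}) (lq : 2.-tuple {mpoly R[2]}) k :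
  (forall j, msize (tnth lq j) <= 2)%N -> (msize p <= k)%N -> (msize (p \mPo lq) <= k)%N.
Proof.
move=> hl hp; rewrite comp_mpolyE; apply: leq_trans (mmeasure_sum _ _ _ _) _.
apply/bigmax_leqP_seq => m hm _.
apply: leq_trans (msizeZ_le _ _) _.
rewrite !big_ord_recl big_ord0 mulr1.
apply: leq_trans (msizeM_le' _ _) _.
have h1 := msize_pow (m ord0) (hl ord0).
have h2 := msize_pow (m (lift ord0 ord0)) (hl (lift ord0 ord0)).
have h3 := msize_mdeg_lt hm.
have : mdeg m = (m ord0 + m (lift ord0 ord0))%N.
  by rewrite mdegE !big_ord_recl big_ord0 addn0.
lia.
Qed.


Definition EV (c : nat -> nat -> R) x y := c 0 0 + c 0 1 * y^+1 + c 0 2 * y^+2 + c 0 3 * y^+3 + c 0 4 * y^+4 + c 1 0 * x^+1 + c 1 1 * x^+1 * y^+1 + c 1 2 * x^+1 * y^+2 + c 1 3 * x^+1 * y^+3 + c 2 0 * x^+2 + c 2 1 * x^+2 * y^+1 + c 2 2 * x^+2 * y^+2 + c 3 0 * x^+3 + c 3 1 * x^+3 * y^+1 + c 4 0 * x^+4.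
Definition DV (c d : nat -> nat -> R) x y := (1%:R * c 1 0 + 1%:R * d 0 1) + (1%:R * c 1 1 + 2%:R * d 0 2) * y^+1 + (1%:R * c 1 2 + 3%:R * d 0 3) * y^+2 + (1%:R * c 1 3 + 4%:R * d 0 4) * y^+3 + (2%:R * c 2 0 + 1%:R * d 1 1) * x^+1 + (2%:R * c 2 1 + 2%:R * d 1 2) * x^+1 * y^+1 + (2%:R * c 2 2 + 3%:R * d 1 3) * x^+1 * y^+2 + (3%:R * c 3 0 + 1%:R * d 2 1) * x^+2 + (3%:R * c 3 1 + 2%:R * d 2 2) * x^+2 * y^+1 + (4%:R * c 4 0 + 1%:R * d 3 1) * x^+3.

Lemma poly15 (c : nat -> nat -> R) x y : (forall i j, (5 <= i + j)%N -> c i j = 0) ->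
  \sum_(i < 5) \sum_(j < 5) c i j * (x ^+ i * y ^+ j) = EV c x y.
Proof.
move=> hc; rewrite !big_ord_recr !big_ord0 /=.
rewrite (hc 1 4 isT) (hc 2 3 isT) (hc 2 4 isT) (hc 3 2 isT) (hc 3 3 isT) (hc 3 4 isT) (hc 4 1 isT) (hc 4 2 isT) (hc 4 3 isT) (hc 4 4 isT).
rewrite /EV; ring.
Qed.

Lemma dpoly15 (c d : nat -> nat -> R) x y : (forall i j, (5 <= i + j)%N -> c i j = 0) ->
  (forall i j, (5 <= i + j)%N -> d i j = 0) ->
  \sum_(i < 5) \sum_(j < 5) (c i.+1 j *+ i.+1) * (x ^+ i * y ^+ j) +
  \sum_(i < 5) \sum_(j < 5) (d i j.+1 *+ j.+1) * (x ^+ i * y ^+ j) = DV c d x y.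
Proof.
move=> hc hd; rewrite !big_ord_recr !big_ord0 /=.
rewrite ?(hc 0 5 isT) ?(hc 1 4 isT) ?(hc 1 5 isT) ?(hc 2 3 isT) ?(hc 2 4 isT) ?(hc 2 5 isT) ?(hc 3 2 isT) ?(hc 3 3 isT) ?(hc 3 4 isT) ?(hc 3 5 isT) ?(hc 4 1 isT) ?(hc 4 2 isT) ?(hc 4 3 isT) ?(hc 4 4 isT) ?(hc 4 5 isT) ?(hc 5 0 isT) ?(hc 5 1 isT) ?(hc 5 2 isT) ?(hc 5 3 isT) ?(hc 5 4 isT) ?(hc 5 5 isT) ?(hd 0 5 isT) ?(hd 1 4 isT) ?(hd 1 5 isT) ?(hd 2 3 isT) ?(hd 2 4 isT) ?(hd 2 5 isT) ?(hd 3 2 isT) ?(hd 3 3 isT) ?(hd 3 4 isT) ?(hd 3 5 isT) ?(hd 4 1 isT) ?(hd 4 2 isT) ?(hd 4 3 isT) ?(hd 4 4 isT) ?(hd 4 5 isT) ?(hd 5 0 isT) ?(hd 5 1 isT) ?(hd 5 2 isT) ?(hd 5 3 isT) ?(hd 5 4 isT) ?(hd 5 5 isT).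
rewrite /DV; ring.
Qed.

Lemma eval15 (p : {mpoly R[2]}) x y : (msize p <= 5)%N ->
  p.@[pt (x, y)] = EV (fun i j => p@_(mk i j)) x y.
Proof.
move=> hp; rewrite eval_expand //; apply: (poly15 (c := fun i j => p@_(mk i j))).
by move=> i j; exact: coef_hi.
Qed.

Lemma div15 (p q : {mpoly R[2]}) x y : (msize p <= 5)%N -> (msize q <= 5)%N ->
  (div2 p q).@[pt (x, y)] = DV (fun i j => p@_(mk i j)) (fun i j => q@_(mk i j)) x y.
Proof.
move=> hp hq; rewrite /div2 mevalD !eval_expand ?msize_mderiv //.
under eq_bigr do under eq_bigr do rewrite coef_d0.
under [X in _ + X]eq_bigr do under eq_bigr do rewrite coef_d1.
apply: (dpoly15 (c := fun i j => p@_(mk i j)) (d := fun i j => q@_(mk i j))).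
  by move=> i j; exact: coef_hi.
by move=> i j; exact: coef_hi.
Qed.

Lemma uni5 (a0 a1 a2 a3 a4 : R) :
  (forall s : R, 0 <= s -> s <= 1 -> a0 + a1 * s + a2 * s^+2 + a3 * s^+3 + a4 * s^+4 = 0) ->
  [/\ a0 = 0, a1 = 0, a2 = 0, a3 = 0 & a4 = 0].
Proof.
move=> h.
have h0 := h 0 (lexx _) ler01.
have h1 := h (1/4) ltac:(lra) ltac:(lra).
have h2 := h (1/2) ltac:(lra) ltac:(lra).
have h3 := h (3/4) ltac:(lra) ltac:(lra).
have h4 := h 1 ler01 (lexx _).
split; lra.
Qed.

Lemma solve12 (c11 c21 c12 c31 c22 c13 d11 d21 d12 d31 d22 d13 : R) :
  48 * c11 + 12 * c21 + 36 * c12 + 3 * c31 + 9 * c22 + 27 * c13 = 0 ->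
  48 * d11 + 12 * d21 + 36 * d12 + 3 * d31 + 9 * d22 + 27 * d13 = 0 ->
  4 * c11 + 2 * c21 + 2 * c12 + c31 + c22 + c13 = 0 ->
  4 * d11 + 2 * d21 + 2 * d12 + d31 + d22 + d13 = 0 ->
  48 * c11 + 36 * c21 + 12 * c12 + 27 * c31 + 9 * c22 + 3 * c13 = 0 ->
  48 * d11 + 36 * d21 + 12 * d12 + 27 * d31 + 9 * d22 + 3 * d13 = 0 ->
  16 * d11 + 4 * d21 + d31 = 0 ->
  48 * d11 + 36 * d21 + 27 * d31 = 0 ->
  16 * c11 + 4 * c12 + c13 = 0 ->
  48 * c11 + 36 * c12 + 27 * c13 = 0 ->
  48 * c11 + 24 * c21 + 36 * c12 + 9 * c31 + 18 * c22 + 27 * c13 + 16 * d11 + 4 * d21 + 24 * d12 + d31 + 6 * d22 + 27 * d13 = 0 ->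
  16 * c11 + 24 * c21 + 4 * c12 + 27 * c31 + 6 * c22 + c13 + 48 * d11 + 36 * d21 + 24 * d12 + 27 * d31 + 18 * d22 + 9 * d13 = 0 ->
  c11 = 0 /\ c21 = 0 /\ c12 = 0 /\ c31 = 0 /\ c22 = 0 /\ c13 = 0 /\ d11 = 0 /\ d21 = 0 /\ d12 = 0 /\ d31 = 0 /\ d22 = 0 /\ d13 = 0.
Proof.
move=> h0 h1 h2 h3 h4 h5 h6 h7 h8 h9 h10 h11.
have e0 : 48 * c11 = 3 * (48 * c11 + 12 * c21 + 36 * c12 + 3 * c31 + 9 * c22 + 27 * c13) + (- 36) * (4 * c11 + 2 * c21 + 2 * c12 + c31 + c22 + c13) + 1 * (48 * c11 + 36 * c21 + 12 * c12 + 27 * c31 + 9 * c22 + 3 * c13) + 6 * (16 * c11 + 4 * c12 + c13) + (- 2) * (48 * c11 + 36 * c12 + 27 * c13) by ring.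
rewrite h0 h2 h4 h8 h9 in e0.
have z0 : c11 = 0 by apply/eqP; move: e0; rewrite !mulr0 !addr0 => /eqP; rewrite mulf_eq0 pnatr_eq0 /=.
have e1 : 72 * c21 = (- 9) * (48 * c11 + 12 * c21 + 36 * c12 + 3 * c31 + 9 * c22 + 27 * c13) + (- 2) * (48 * d11 + 12 * d21 + 36 * d12 + 3 * d31 + 9 * d22 + 27 * d13) + 9 * (48 * c11 + 36 * c21 + 12 * c12 + 27 * c31 + 9 * c22 + 3 * c13) + 18 * (48 * d11 + 36 * d21 + 12 * d12 + 27 * d31 + 9 * d22 + 3 * d13) + 3 * (16 * d11 + 4 * d21 + d31) + (- 9) * (48 * d11 + 36 * d21 + 27 * d31) + (- 18) * (16 * c11 + 4 * c12 + c13) + 6 * (48 * c11 + 36 * c12 + 27 * c13) + 3 * (48 * c11 + 24 * c21 + 36 * c12 + 9 * c31 + 18 * c22 + 27 * c13 + 16 * d11 + 4 * d21 + 24 * d12 + d31 + 6 * d22 + 27 * d13) + (- 9) * (16 * c11 + 24 * c21 + 4 * c12 + 27 * c31 + 6 * c22 + c13 + 48 * d11 + 36 * d21 + 24 * d12 + 27 * d31 + 18 * d22 + 9 * d13) by ring.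
rewrite h0 h1 h4 h5 h6 h7 h8 h9 h10 h11 in e1.
have z1 : c21 = 0 by apply/eqP; move: e1; rewrite !mulr0 !addr0 => /eqP; rewrite mulf_eq0 pnatr_eq0 /=.
have e2 : 72 * c12 = (- 24) * (48 * c11 + 12 * c21 + 36 * c12 + 3 * c31 + 9 * c22 + 27 * c13) + 288 * (4 * c11 + 2 * c21 + 2 * c12 + c31 + c22 + c13) + (- 8) * (48 * c11 + 36 * c21 + 12 * c12 + 27 * c31 + 9 * c22 + 3 * c13) + (- 21) * (16 * c11 + 4 * c12 + c13) + 15 * (48 * c11 + 36 * c12 + 27 * c13) by ring.
rewrite h0 h2 h4 h8 h9 in e2.
have z2 : c12 = 0 by apply/eqP; move: e2; rewrite !mulr0 !addr0 => /eqP; rewrite mulf_eq0 pnatr_eq0 /=.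
have e3 : 72 * c31 = 6 * (48 * c11 + 12 * c21 + 36 * c12 + 3 * c31 + 9 * c22 + 27 * c13) + 2 * (48 * d11 + 12 * d21 + 36 * d12 + 3 * d31 + 9 * d22 + 27 * d13) + (- 6) * (48 * c11 + 36 * c21 + 12 * c12 + 27 * c31 + 9 * c22 + 3 * c13) + (- 18) * (48 * d11 + 36 * d21 + 12 * d12 + 27 * d31 + 9 * d22 + 3 * d13) + (- 3) * (16 * d11 + 4 * d21 + d31) + 9 * (48 * d11 + 36 * d21 + 27 * d31) + 9 * (16 * c11 + 4 * c12 + c13) + (- 3) * (48 * c11 + 36 * c12 + 27 * c13) + (- 3) * (48 * c11 + 24 * c21 + 36 * c12 + 9 * c31 + 18 * c22 + 27 * c13 + 16 * d11 + 4 * d21 + 24 * d12 + d31 + 6 * d22 + 27 * d13) + 9 * (16 * c11 + 24 * c21 + 4 * c12 + 27 * c31 + 6 * c22 + c13 + 48 * d11 + 36 * d21 + 24 * d12 + 27 * d31 + 18 * d22 + 9 * d13) by ring.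
rewrite h0 h1 h4 h5 h6 h7 h8 h9 h10 h11 in e3.
have z3 : c31 = 0 by apply/eqP; move: e3; rewrite !mulr0 !addr0 => /eqP; rewrite mulf_eq0 pnatr_eq0 /=.
have e4 : 72 * c22 = 18 * (48 * c11 + 12 * c21 + 36 * c12 + 3 * c31 + 9 * c22 + 27 * c13) + 2 * (48 * d11 + 12 * d21 + 36 * d12 + 3 * d31 + 9 * d22 + 27 * d13) + (- 10) * (48 * c11 + 36 * c21 + 12 * c12 + 27 * c31 + 9 * c22 + 3 * c13) + (- 18) * (48 * d11 + 36 * d21 + 12 * d12 + 27 * d31 + 9 * d22 + 3 * d13) + (- 3) * (16 * d11 + 4 * d21 + d31) + 9 * (48 * d11 + 36 * d21 + 27 * d31) + 21 * (16 * c11 + 4 * c12 + c13) + (- 15) * (48 * c11 + 36 * c12 + 27 * c13) + (- 3) * (48 * c11 + 24 * c21 + 36 * c12 + 9 * c31 + 18 * c22 + 27 * c13 + 16 * d11 + 4 * d21 + 24 * d12 + d31 + 6 * d22 + 27 * d13) + 9 * (16 * c11 + 24 * c21 + 4 * c12 + 27 * c31 + 6 * c22 + c13 + 48 * d11 + 36 * d21 + 24 * d12 + 27 * d31 + 18 * d22 + 9 * d13) by ring.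
rewrite h0 h1 h4 h5 h6 h7 h8 h9 h10 h11 in e4.
have z4 : c22 = 0 by apply/eqP; move: e4; rewrite !mulr0 !addr0 => /eqP; rewrite mulf_eq0 pnatr_eq0 /=.
have e5 : 18 * c13 = 6 * (48 * c11 + 12 * c21 + 36 * c12 + 3 * c31 + 9 * c22 + 27 * c13) + (- 72) * (4 * c11 + 2 * c21 + 2 * c12 + c31 + c22 + c13) + 2 * (48 * c11 + 36 * c21 + 12 * c12 + 27 * c31 + 9 * c22 + 3 * c13) + 3 * (16 * c11 + 4 * c12 + c13) + (- 3) * (48 * c11 + 36 * c12 + 27 * c13) by ring.
rewrite h0 h2 h4 h8 h9 in e5.
have z5 : c13 = 0 by apply/eqP; move: e5; rewrite !mulr0 !addr0 => /eqP; rewrite mulf_eq0 pnatr_eq0 /=.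
have e6 : 48 * d11 = 1 * (48 * d11 + 12 * d21 + 36 * d12 + 3 * d31 + 9 * d22 + 27 * d13) + (- 36) * (4 * d11 + 2 * d21 + 2 * d12 + d31 + d22 + d13) + 3 * (48 * d11 + 36 * d21 + 12 * d12 + 27 * d31 + 9 * d22 + 3 * d13) + 6 * (16 * d11 + 4 * d21 + d31) + (- 2) * (48 * d11 + 36 * d21 + 27 * d31) by ring.
rewrite h1 h3 h5 h6 h7 in e6.
have z6 : d11 = 0 by apply/eqP; move: e6; rewrite !mulr0 !addr0 => /eqP; rewrite mulf_eq0 pnatr_eq0 /=.
have e7 : 72 * d21 = (- 8) * (48 * d11 + 12 * d21 + 36 * d12 + 3 * d31 + 9 * d22 + 27 * d13) + 288 * (4 * d11 + 2 * d21 + 2 * d12 + d31 + d22 + d13) + (- 24) * (48 * d11 + 36 * d21 + 12 * d12 + 27 * d31 + 9 * d22 + 3 * d13) + (- 21) * (16 * d11 + 4 * d21 + d31) + 15 * (48 * d11 + 36 * d21 + 27 * d31) by ring.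
rewrite h1 h3 h5 h6 h7 in e7.
have z7 : d21 = 0 by apply/eqP; move: e7; rewrite !mulr0 !addr0 => /eqP; rewrite mulf_eq0 pnatr_eq0 /=.
have e8 : 72 * d12 = 18 * (48 * c11 + 12 * c21 + 36 * c12 + 3 * c31 + 9 * c22 + 27 * c13) + 9 * (48 * d11 + 12 * d21 + 36 * d12 + 3 * d31 + 9 * d22 + 27 * d13) + (- 2) * (48 * c11 + 36 * c21 + 12 * c12 + 27 * c31 + 9 * c22 + 3 * c13) + (- 9) * (48 * d11 + 36 * d21 + 12 * d12 + 27 * d31 + 9 * d22 + 3 * d13) + (- 18) * (16 * d11 + 4 * d21 + d31) + 6 * (48 * d11 + 36 * d21 + 27 * d31) + 3 * (16 * c11 + 4 * c12 + c13) + (- 9) * (48 * c11 + 36 * c12 + 27 * c13) + (- 9) * (48 * c11 + 24 * c21 + 36 * c12 + 9 * c31 + 18 * c22 + 27 * c13 + 16 * d11 + 4 * d21 + 24 * d12 + d31 + 6 * d22 + 27 * d13) + 3 * (16 * c11 + 24 * c21 + 4 * c12 + 27 * c31 + 6 * c22 + c13 + 48 * d11 + 36 * d21 + 24 * d12 + 27 * d31 + 18 * d22 + 9 * d13) by ring.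
rewrite h0 h1 h4 h5 h6 h7 h8 h9 h10 h11 in e8.
have z8 : d12 = 0 by apply/eqP; move: e8; rewrite !mulr0 !addr0 => /eqP; rewrite mulf_eq0 pnatr_eq0 /=.
have e9 : 18 * d31 = 2 * (48 * d11 + 12 * d21 + 36 * d12 + 3 * d31 + 9 * d22 + 27 * d13) + (- 72) * (4 * d11 + 2 * d21 + 2 * d12 + d31 + d22 + d13) + 6 * (48 * d11 + 36 * d21 + 12 * d12 + 27 * d31 + 9 * d22 + 3 * d13) + 3 * (16 * d11 + 4 * d21 + d31) + (- 3) * (48 * d11 + 36 * d21 + 27 * d31) by ring.
rewrite h1 h3 h5 h6 h7 in e9.
have z9 : d31 = 0 by apply/eqP; move: e9; rewrite !mulr0 !addr0 => /eqP; rewrite mulf_eq0 pnatr_eq0 /=.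
have e10 : 72 * d22 = (- 18) * (48 * c11 + 12 * c21 + 36 * c12 + 3 * c31 + 9 * c22 + 27 * c13) + (- 10) * (48 * d11 + 12 * d21 + 36 * d12 + 3 * d31 + 9 * d22 + 27 * d13) + 2 * (48 * c11 + 36 * c21 + 12 * c12 + 27 * c31 + 9 * c22 + 3 * c13) + 18 * (48 * d11 + 36 * d21 + 12 * d12 + 27 * d31 + 9 * d22 + 3 * d13) + 21 * (16 * d11 + 4 * d21 + d31) + (- 15) * (48 * d11 + 36 * d21 + 27 * d31) + (- 3) * (16 * c11 + 4 * c12 + c13) + 9 * (48 * c11 + 36 * c12 + 27 * c13) + 9 * (48 * c11 + 24 * c21 + 36 * c12 + 9 * c31 + 18 * c22 + 27 * c13 + 16 * d11 + 4 * d21 + 24 * d12 + d31 + 6 * d22 + 27 * d13) + (- 3) * (16 * c11 + 24 * c21 + 4 * c12 + 27 * c31 + 6 * c22 + c13 + 48 * d11 + 36 * d21 + 24 * d12 + 27 * d31 + 18 * d22 + 9 * d13) by ring.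
rewrite h0 h1 h4 h5 h6 h7 h8 h9 h10 h11 in e10.
have z10 : d22 = 0 by apply/eqP; move: e10; rewrite !mulr0 !addr0 => /eqP; rewrite mulf_eq0 pnatr_eq0 /=.
have e11 : 72 * d13 = (- 18) * (48 * c11 + 12 * c21 + 36 * c12 + 3 * c31 + 9 * c22 + 27 * c13) + (- 6) * (48 * d11 + 12 * d21 + 36 * d12 + 3 * d31 + 9 * d22 + 27 * d13) + 2 * (48 * c11 + 36 * c21 + 12 * c12 + 27 * c31 + 9 * c22 + 3 * c13) + 6 * (48 * d11 + 36 * d21 + 12 * d12 + 27 * d31 + 9 * d22 + 3 * d13) + 9 * (16 * d11 + 4 * d21 + d31) + (- 3) * (48 * d11 + 36 * d21 + 27 * d31) + (- 3) * (16 * c11 + 4 * c12 + c13) + 9 * (48 * c11 + 36 * c12 + 27 * c13) + 9 * (48 * c11 + 24 * c21 + 36 * c12 + 9 * c31 + 18 * c22 + 27 * c13 + 16 * d11 + 4 * d21 + 24 * d12 + d31 + 6 * d22 + 27 * d13) + (- 3) * (16 * c11 + 24 * c21 + 4 * c12 + 27 * c31 + 6 * c22 + c13 + 48 * d11 + 36 * d21 + 24 * d12 + 27 * d31 + 18 * d22 + 9 * d13) by ring.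
rewrite h0 h1 h4 h5 h6 h7 h8 h9 h10 h11 in e11.
have z11 : d13 = 0 by apply/eqP; move: e11; rewrite !mulr0 !addr0 => /eqP; rewrite mulf_eq0 pnatr_eq0 /=.
by do ?split.
Qed.

Lemma ref (c d : nat -> nat -> R) :
  (forall s, 0 <= s -> s <= 1 -> [/\ EV c s 0 = 0, EV c 0 s = 0 & EV c s (1-s) = 0] /\
     [/\ EV d s 0 = 0, EV d 0 s = 0 & EV d s (1-s) = 0]) ->
  (forall s t, 0 <= s -> 0 <= t -> s + t <= 1 -> DV c d s t = 0) ->
  forall x y, EV c x y = 0 /\ EV d x y = 0.
Proof.
move=> hb hd.
have [[_ _ ec0] [_ _ ed0]] := hb (1/4) ltac:(lra) ltac:(lra).
have [[_ _ ec1] [_ _ ed1]] := hb (1/2) ltac:(lra) ltac:(lra).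
have [[_ _ ec2] [_ _ ed2]] := hb (3/4) ltac:(lra) ltac:(lra).
have ev0 := hd (1/4) (0) ltac:(lra) ltac:(lra) ltac:(lra).
have ev1 := hd (3/4) (0) ltac:(lra) ltac:(lra) ltac:(lra).
have ev2 := hd (0) (1/4) ltac:(lra) ltac:(lra) ltac:(lra).
have ev3 := hd (0) (3/4) ltac:(lra) ltac:(lra) ltac:(lra).
have ev4 := hd (1/4) (3/4) ltac:(lra) ltac:(lra) ltac:(lra).
have ev5 := hd (3/4) (1/4) ltac:(lra) ltac:(lra) ltac:(lra).
have [c00 c10 c20 c30 c40] : [/\ c 0 0 = 0, c 1 0 = 0, c 2 0 = 0, c 3 0 = 0 & c 4 0 = 0].
  apply: uni5 => s h1 h2; have [[e _ _] _] := hb s h1 h2.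
  by transitivity (EV c s 0); [rewrite /EV; ring | exact: e].
have [_ c01 c02 c03 c04] : [/\ c 0 0 = 0, c 0 1 = 0, c 0 2 = 0, c 0 3 = 0 & c 0 4 = 0].
  apply: uni5 => s h1 h2; have [[_ e _] _] := hb s h1 h2.
  by transitivity (EV c 0 s); [rewrite /EV; ring | exact: e].
have [d00 d10 d20 d30 d40] : [/\ d 0 0 = 0, d 1 0 = 0, d 2 0 = 0, d 3 0 = 0 & d 4 0 = 0].
  apply: uni5 => s h1 h2; have [_ [e _ _]] := hb s h1 h2.
  by transitivity (EV d s 0); [rewrite /EV; ring | exact: e].
have [_ d01 d02 d03 d04] : [/\ d 0 0 = 0, d 0 1 = 0, d 0 2 = 0, d 0 3 = 0 & d 0 4 = 0].
  apply: uni5 => s h1 h2; have [_ [_ e _]] := hb s h1 h2.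
  by transitivity (EV d 0 s); [rewrite /EV; ring | exact: e].
rewrite /EV ?c00 ?c10 ?c20 ?c30 ?c40 ?c01 ?c02 ?c03 ?c04 in ec0; rewrite /EV ?d00 ?d10 ?d20 ?d30 ?d40 ?d01 ?d02 ?d03 ?d04 in ed0.
rewrite /EV ?c00 ?c10 ?c20 ?c30 ?c40 ?c01 ?c02 ?c03 ?c04 in ec1; rewrite /EV ?d00 ?d10 ?d20 ?d30 ?d40 ?d01 ?d02 ?d03 ?d04 in ed1.
rewrite /EV ?c00 ?c10 ?c20 ?c30 ?c40 ?c01 ?c02 ?c03 ?c04 in ec2; rewrite /EV ?d00 ?d10 ?d20 ?d30 ?d40 ?d01 ?d02 ?d03 ?d04 in ed2.
rewrite /DV ?c00 ?c10 ?c20 ?c30 ?c40 ?c01 ?c02 ?c03 ?c04 ?d00 ?d10 ?d20 ?d30 ?d40 ?d01 ?d02 ?d03 ?d04 in ev0.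
rewrite /DV ?c00 ?c10 ?c20 ?c30 ?c40 ?c01 ?c02 ?c03 ?c04 ?d00 ?d10 ?d20 ?d30 ?d40 ?d01 ?d02 ?d03 ?d04 in ev1.
rewrite /DV ?c00 ?c10 ?c20 ?c30 ?c40 ?c01 ?c02 ?c03 ?c04 ?d00 ?d10 ?d20 ?d30 ?d40 ?d01 ?d02 ?d03 ?d04 in ev2.
rewrite /DV ?c00 ?c10 ?c20 ?c30 ?c40 ?c01 ?c02 ?c03 ?c04 ?d00 ?d10 ?d20 ?d30 ?d40 ?d01 ?d02 ?d03 ?d04 in ev3.
rewrite /DV ?c00 ?c10 ?c20 ?c30 ?c40 ?c01 ?c02 ?c03 ?c04 ?d00 ?d10 ?d20 ?d30 ?d40 ?d01 ?d02 ?d03 ?d04 in ev4.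
rewrite /DV ?c00 ?c10 ?c20 ?c30 ?c40 ?c01 ?c02 ?c03 ?c04 ?d00 ?d10 ?d20 ?d30 ?d40 ?d01 ?d02 ?d03 ?d04 in ev5.
have iec0 : 48 * c 1 1 + 12 * c 2 1 + 36 * c 1 2 + 3 * c 3 1 + 9 * c 2 2 + 27 * c 1 3 = 0 by rewrite -[RHS](mulr0 256) -ec0; field.
have ied0 : 48 * d 1 1 + 12 * d 2 1 + 36 * d 1 2 + 3 * d 3 1 + 9 * d 2 2 + 27 * d 1 3 = 0 by rewrite -[RHS](mulr0 256) -ed0; field.
have iec1 : 4 * c 1 1 + 2 * c 2 1 + 2 * c 1 2 + c 3 1 + c 2 2 + c 1 3 = 0 by rewrite -[RHS](mulr0 16) -ec1; field.
have ied1 : 4 * d 1 1 + 2 * d 2 1 + 2 * d 1 2 + d 3 1 + d 2 2 + d 1 3 = 0 by rewrite -[RHS](mulr0 16) -ed1; field.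
have iec2 : 48 * c 1 1 + 36 * c 2 1 + 12 * c 1 2 + 27 * c 3 1 + 9 * c 2 2 + 3 * c 1 3 = 0 by rewrite -[RHS](mulr0 256) -ec2; field.
have ied2 : 48 * d 1 1 + 36 * d 2 1 + 12 * d 1 2 + 27 * d 3 1 + 9 * d 2 2 + 3 * d 1 3 = 0 by rewrite -[RHS](mulr0 256) -ed2; field.
have iev0 : 16 * d 1 1 + 4 * d 2 1 + d 3 1 = 0 by rewrite -[RHS](mulr0 64) -ev0; field.
have iev1 : 48 * d 1 1 + 36 * d 2 1 + 27 * d 3 1 = 0 by rewrite -[RHS](mulr0 64) -ev1; field.
have iev2 : 16 * c 1 1 + 4 * c 1 2 + c 1 3 = 0 by rewrite -[RHS](mulr0 64) -ev2; field.
have iev3 : 48 * c 1 1 + 36 * c 1 2 + 27 * c 1 3 = 0 by rewrite -[RHS](mulr0 64) -ev3; field.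
have iev4 : 48 * c 1 1 + 24 * c 2 1 + 36 * c 1 2 + 9 * c 3 1 + 18 * c 2 2 + 27 * c 1 3 + 16 * d 1 1 + 4 * d 2 1 + 24 * d 1 2 + d 3 1 + 6 * d 2 2 + 27 * d 1 3 = 0 by rewrite -[RHS](mulr0 64) -ev4; field.
have iev5 : 16 * c 1 1 + 24 * c 2 1 + 4 * c 1 2 + 27 * c 3 1 + 6 * c 2 2 + c 1 3 + 48 * d 1 1 + 36 * d 2 1 + 24 * d 1 2 + 27 * d 3 1 + 18 * d 2 2 + 9 * d 1 3 = 0 by rewrite -[RHS](mulr0 64) -ev5; field.
have := solve12 iec0 ied0 iec1 ied1 iec2 ied2 iev0 iev1 iev2 iev3 iev4 iev5.
move=> [c11 [c21 [c12 [c31 [c22 [c13 [d11 [d21 [d12 [d31 [d22 d13]]]]]]]]]]].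
by move=> x y; rewrite /EV c00 c10 c20 c30 c40 c01 c02 c03 c04 d00 d10 d20 d30 d40 d01 d02 d03 d04 c11 c21 c12 c31 c22 c13 d11 d21 d12 d31 d22 d13; split; ring.
Qed.

Lemma Zlemma (c : nat -> nat -> R) : (forall x y, EV c x y = 0) ->
  forall i j, (i + j <= 4)%N -> c i j = 0.
Proof.
move=> h.
have hA : forall y, [/\ c 0 0 + c 0 1 * y + c 0 2 * y^+2 + c 0 3 * y^+3 + c 0 4 * y^+4 = 0,
                       c 1 0 + c 1 1 * y + c 1 2 * y^+2 + c 1 3 * y^+3 + 0 * y^+4 = 0,
                       c 2 0 + c 2 1 * y + c 2 2 * y^+2 + 0 * y^+3 + 0 * y^+4 = 0,
                       c 3 0 + c 3 1 * y + 0 * y^+2 + 0 * y^+3 + 0 * y^+4 = 0 &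
                       c 4 0 + 0 * y + 0 * y^+2 + 0 * y^+3 + 0 * y^+4 = 0].
  move=> y; apply: uni5 => x _ _.
  by transitivity (EV c x y); [rewrite /EV; ring | exact: h].
have [a00 a01 a02 a03 a04] := uni5 (fun y _ _ => let: And5 e _ _ _ _ := hA y in e).
have [a10 a11 a12 a13 _] := uni5 (fun y _ _ => let: And5 _ e _ _ _ := hA y in e).
have [a20 a21 a22 _ _] := uni5 (fun y _ _ => let: And5 _ _ e _ _ := hA y in e).
have [a30 a31 _ _ _] := uni5 (fun y _ _ => let: And5 _ _ _ e _ := hA y in e).
have [a40 _ _ _ _] := uni5 (fun y _ _ => let: And5 _ _ _ _ e := hA y in e).
move=> i j hij.
do 5?[case: i hij => [|i] hij]; do 5?[case: j hij => [|j] hij] => //; lia.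
Qed.

Lemma mpoly_zero (p : {mpoly R[2]}) : (msize p <= 5)%N -> (forall x y, p.@[pt (x, y)] = 0) -> p = 0.
Proof.
move=> hp h.
have hz := Zlemma (c := fun i j => p@_(mk i j)) (fun x y => etrans (esym (eval15 x y hp)) (h x y)).
rewrite (mpoly_expand hp) big1 // => i _; rewrite big1 // => j _.
case: (leqP (i + j) 4) => hij.
  by rewrite (hz _ _ hij) scale0r.
by rewrite coef_hi ?scale0r.
Qed.

Lemma dX_eval (i j : 'I_2) (v : 'I_2 -> R) : (mderiv i ('X_j : {mpoly R[2]})).@[v] = (j == i)%:R.
Proof.
rewrite mderivX mnm1E; case: eqP => [->|_].
  have -> : (U_(i) - U_(i))%MM = 0%MM by apply/mnmP => k; rewrite mnmBE subnn mnm0E.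
  by rewrite mpolyX0 scale1r meval1.
by rewrite scale0r meval0.
Qed.

Lemma msize_aff (k u w : R) (i j : 'I_2) : (msize (k%:MP + u *: 'X_i + w *: 'X_j : {mpoly R[2]}) <= 2)%N.
Proof.
apply: leq_trans (msizeD_le _ _) _; rewrite geq_max; apply/andP; split.
  apply: leq_trans (msizeD_le _ _) _; rewrite geq_max; apply/andP; split.
    by rewrite msizeC; case: (k != 0).
  by apply: leq_trans (msizeZ_le _ _) _; rewrite msizeX mdeg1.
by apply: leq_trans (msizeZ_le _ _) _; rewrite msizeX mdeg1.
Qed.

Lemma msize_lin (p q : {mpoly R[2]}) (x y : R) k : (msize p <= k)%N -> (msize q <= k)%N ->
  (msize (x *: p - y *: q) <= k)%N.
Proof.
move=> hp hq; apply: leq_trans (msizeD_le _ _) _; rewrite geq_max; apply/andP; split.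
  exact: leq_trans (msizeZ_le _ _) hp.
by rewrite msizeN; exact: leq_trans (msizeZ_le _ _) hq.
Qed.
End S.

Unset Implicit Arguments.
Set Strict Implicit.

Theorem lemma3p1 (R : realFieldType) (a b c : R * R) (v1 v2 : {mpoly R[2]}) :
  nondeg_triangle a b c ->
  deg_le 4 v1 -> deg_le 4 v2 ->
  (forall x, on_boundary a b c x -> v1.@[pt x] = 0 /\ v2.@[pt x] = 0) ->
  (forall x, in_triangle a b c x -> (div2 v1 v2).@[pt x] = 0) ->
  v1 = 0 /\ v2 = 0.
Proof.
rewrite /nondeg_triangle /deg_le => hnd hv1 hv2 hb hdiv.
pose i1 := @Ordinal 2 1 isT.
pose L0 : {mpoly R[2]} := (a.1)%:MP + (b.1 - a.1) *: 'X_(ord0) + (c.1 - a.1) *: 'X_i1.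
pose L1 : {mpoly R[2]} := (a.2)%:MP + (b.2 - a.2) *: 'X_(ord0) + (c.2 - a.2) *: 'X_i1.
pose lq : 2.-tuple {mpoly R[2]} := [tuple L0; L1].
pose P s t := comb3 (1 - s - t) s t a b c.
have hlq : forall s t (i : 'I_2), (tnth lq i).@[pt (s, t)] = pt (P s t) i.
  move=> s t [[|[|//]] hi].
    rewrite (_ : tnth lq _ = L0) //= /L0 !mevalD mevalC !mevalZ !mevalXU /pt /P /comb3 /=; ring.
  rewrite (_ : tnth lq _ = L1) //= /L1 !mevalD mevalC !mevalZ !mevalXU /pt /P /comb3 /=; ring.
have hcomp : forall p s t, (p \mPo lq).@[pt (s, t)] = p.@[pt (P s t)].
  by move=> p s t; rewrite comp_mpoly_meval; apply: meval_eq => i; exact: hlq.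
have hL : forall j, (msize (tnth lq j) <= 2)%N.
  by move=> [[|[|//]] hj]; [rewrite (_ : tnth lq _ = L0) // | rewrite (_ : tnth lq _ = L1) //];
    exact: msize_aff.
pose W1 := v1 \mPo lq. pose W2 := v2 \mPo lq.
pose U1 := (c.2 - a.2) *: W1 - (c.1 - a.1) *: W2.
pose U2 := (b.1 - a.1) *: W2 - (b.2 - a.2) *: W1.
have hU1 : (msize U1 <= 5)%N by apply: msize_lin; apply: msize_comp.
have hU2 : (msize U2 <= 5)%N by apply: msize_lin; apply: msize_comp.
have eU1 : forall s t, U1.@[pt (s, t)] = (c.2 - a.2) * v1.@[pt (P s t)] - (c.1 - a.1) * v2.@[pt (P s t)].
  by move=> s t; rewrite mevalB !mevalZ !hcomp.
have eU2 : forall s t, U2.@[pt (s, t)] = (b.1 - a.1) * v2.@[pt (P s t)] - (b.2 - a.2) * v1.@[pt (P s t)].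
  by move=> s t; rewrite mevalB !mevalZ !hcomp.
have hbd : forall s t, on_boundary a b c (P s t) -> U1.@[pt (s, t)] = 0 /\ U2.@[pt (s, t)] = 0.
  move=> s t /hb [z1 z2]; by rewrite eU1 eU2 z1 z2 !mulr0 subr0.
have hb1 : forall s, 0 <= s -> s <= 1 -> on_boundary a b c (P s 0).
  move=> s h1 h2; left; exists s; split => //.
  by rewrite /P /comb3; congr (_, _); ring.
have hb2 : forall s, 0 <= s -> s <= 1 -> on_boundary a b c (P 0 s).
  move=> s h1 h2; right; right; exists (1 - s); split; [lra | lra |].
  by rewrite /P /comb3; congr (_, _); ring.
have hb3 : forall s, 0 <= s -> s <= 1 -> on_boundary a b c (P s (1 - s)).
  move=> s h1 h2; right; left; exists (1 - s); split; [lra | lra |].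
  by rewrite /P /comb3; congr (_, _); ring.
have hdL : forall s t, [/\ (mderiv ord0 L0).@[pt (s, t)] = b.1 - a.1,
    (mderiv i1 L0).@[pt (s, t)] = c.1 - a.1,
    (mderiv ord0 L1).@[pt (s, t)] = b.2 - a.2 &
    (mderiv i1 L1).@[pt (s, t)] = c.2 - a.2].
  move=> s t; rewrite /L0 /L1 !mderivD !mderivC !mderivZ !mevalD !meval0 !mevalZ !dX_eval /=.
  split; ring.
have tq0 : tnth lq ord0 = L0 by [].
have tq1 : tnth lq i1 = L1 by [].
clearbody lq L0 L1.
have hdv : forall s t, (div2 U1 U2).@[pt (s, t)] =
   ((b.1 - a.1) * (c.2 - a.2) - (b.2 - a.2) * (c.1 - a.1)) * (div2 v1 v2).@[pt (P s t)].
  move=> s t; rewrite /div2 /U1 /U2 !mderivB !mderivZ /W1 /W2 !CR_all.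
  rewrite !big_ord_recl !big_ord0 !addr0.
  rewrite !mevalD.
  rewrite ?mevalN.
  rewrite !mevalZ.
  rewrite !mevalD.
  rewrite !mevalM.
  rewrite !hcomp.
  have -> : lift ord0 ord0 = i1 :> 'I_2 by apply: val_inj.
  rewrite tq0 tq1.
  have [-> -> -> ->] := hdL s t.
  move: (v1^`M(ord0)).@[pt (P s t)] (v1^`M(i1)).@[pt (P s t)] (v2^`M(ord0)).@[pt (P s t)] (v2^`M(i1)).@[pt (P s t)].
  move=> A B C D; ring.
have HB : forall s, 0 <= s -> s <= 1 ->
   [/\ EV (fun i j => U1@_(mk i j)) s 0 = 0, EV (fun i j => U1@_(mk i j)) 0 s = 0
     & EV (fun i j => U1@_(mk i j)) s (1 - s) = 0] /\
   [/\ EV (fun i j => U2@_(mk i j)) s 0 = 0, EV (fun i j => U2@_(mk i j)) 0 s = 0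
     & EV (fun i j => U2@_(mk i j)) s (1 - s) = 0].
  move=> s h1 h2.
  have [x1 y1] := hbd s 0 (hb1 s h1 h2).
  have [x2 y2] := hbd 0 s (hb2 s h1 h2).
  have [x3 y3] := hbd s (1 - s) (hb3 s h1 h2).
  split; split.
  - exact: (etrans (esym (eval15 s 0 hU1)) x1).
  - exact: (etrans (esym (eval15 0 s hU1)) x2).
  - exact: (etrans (esym (eval15 s (1 - s) hU1)) x3).
  - exact: (etrans (esym (eval15 s 0 hU2)) y1).
  - exact: (etrans (esym (eval15 0 s hU2)) y2).
  - exact: (etrans (esym (eval15 s (1 - s) hU2)) y3).
have HD : forall s t, 0 <= s -> 0 <= t -> s + t <= 1 ->
    DV (fun i j => U1@_(mk i j)) (fun i j => U2@_(mk i j)) s t = 0.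
  move=> s t hs ht hst.
  have hin : in_triangle a b c (P s t).
    by exists (1 - s - t), s, t; split => //; lra.
  by rewrite -(div15 s t hU1 hU2) hdv (hdiv _ hin) mulr0.
have Z := ref HB HD.
have hW : forall s t, v1.@[pt (P s t)] = 0 /\ v2.@[pt (P s t)] = 0.
  move=> s t; have [z1 z2] := Z s t.
  rewrite -(eval15 s t hU1) eU1 in z1; rewrite -(eval15 s t hU2) eU2 in z2.
  move: z1 z2; move: (v1.@[pt (P s t)]) (v2.@[pt (P s t)]) => A B z1 z2.
  have eA : ((b.1 - a.1) * (c.2 - a.2) - (b.2 - a.2) * (c.1 - a.1)) * A =
    (b.1 - a.1) * ((c.2 - a.2) * A - (c.1 - a.1) * B) + (c.1 - a.1) * ((b.1 - a.1) * B - (b.2 - a.2) * A) by ring.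
  have eB : ((b.1 - a.1) * (c.2 - a.2) - (b.2 - a.2) * (c.1 - a.1)) * B =
    (b.2 - a.2) * ((c.2 - a.2) * A - (c.1 - a.1) * B) + (c.2 - a.2) * ((b.1 - a.1) * B - (b.2 - a.2) * A) by ring.
  rewrite z1 z2 !mulr0 addr0 in eA eB.
  move/eqP: eA; move/eqP: eB; rewrite !mulf_eq0 (negbTE hnd) /= => /eqP -> /eqP -> //.
have hall : forall x y, (x, y) = P (((c.2 - a.2) * (x - a.1) - (c.1 - a.1) * (y - a.2)) /
     ((b.1 - a.1) * (c.2 - a.2) - (b.2 - a.2) * (c.1 - a.1)))
    (((b.1 - a.1) * (y - a.2) - (b.2 - a.2) * (x - a.1)) /
     ((b.1 - a.1) * (c.2 - a.2) - (b.2 - a.2) * (c.1 - a.1))).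
  move=> x y; rewrite /P /comb3 /=; congr (_, _); field; exact: hnd.
split; [apply: (mpoly_zero hv1) => x y; by rewrite hall (proj1 (hW _ _)) | apply: (mpoly_zero hv2) => x y; by rewrite hall (proj2 (hW _ _))].
Qed.
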